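(* Let $\mathcal{S}$ be a state space, let $\mathcal{A}\subset\mathbb{R}^d$ be an action space of finite positive Lebesgue measure, let $R:\mathcal{S}\times\mathcal{A}\to\mathbb{R}$ be a reward function, let $\tau(\cdot\mid s,a)$ be a transition kernel, and let $\gamma\in(0,1)$ and $\tilde{\alpha}>0$. Let $\mathcal{Q}$ be a probability distribution over (measurable) functions $Q:\mathcal{S}\times\mathcal{A}\to\mathbb{R}$ such that for every $(s,a)$ the random variable $Q(s,a)$, $Q\sim\mathcal{Q}$, has bounded support and is sub-Gaussian with mean $\mu(s,a)$ and variance proxy $\sigma^2(s,a)$, with $\sigma\ge 0$. For $\beta\ge 0$ and a next state $s'\sim\tau(\cdot\mid s,a)$ define the pessimistic and the ordinary backups $$\mathcal{T}^{*}_{\beta}Q(s,a)=R(s,a)+\gamma\,\mathbb{E}_{Q\sim\mathcal{Q}}\Big[\tilde{\alpha}\log\Big(\int_{\mathcal{A}}\exp\big(\tilde{\alpha}^{-1}(Q(s',a')-\beta\sigma(s',a'))\big)\,da'\Big)\Big],$$ $$\mathcal{T}^{*}\mu(s,a)=R(s,a)+\gamma\,\tilde{\alpha}\log\Big(\int_{\mathcal{A}}\exp\big(\tilde{\alpha}^{-1}\mu(s',a')\big)\,da'\Big).$$ If $\beta\ge\sup_{(s'',a'')\in\mathcal{S}\times\mathcal{A}}\tfrac12\tilde{\alpha}^{-1}\sigma(s'',a'')$, then for every $(s,a)$ and every next state $s'$, $\mathcal{T}^{*}_{\beta}Q(s,a)\le\mathcal{T}^{*}\mu(s,a)$, i.e.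 the $\beta$-pessimistic backup (which shifts next-state values by $-\beta\sigma(s',a')$) does not overestimate.
   Context: A real random variable $X$ with mean $\mu=\mathbb{E}[X]$ is called sub-Gaussian with variance proxy $\sigma^2$ if $\mathbb{E}[\exp(\lambda X)]\le\exp(\lambda\mu+\tfrac12\lambda^2\sigma^2)$ for all $\lambda\in\mathbb{R}$. Here $\mu(s,a)=\mathbb{E}_{Q\sim\mathcal{Q}}[Q(s,a)]$. *)

(* Defs.v *)
From HB Require Import structures.
From mathcomp Require Import all_boot all_order all_algebra.
From mathcomp Require Import all_classical all_reals all_analysis.
Set Implicit Arguments. Unset Strict Implicit. Unset Printing Implicit Defensive.
Import Order.TTheory GRing.Theory Num.Theory.
Local Open Scope classical_set_scope.
Local Open Scope ring_scope.

(* Euclidean space R^(n+1), built as R * (R * ( ... * R)) with the product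
   sigma-algebra, packaged with its measure display. *)
Fixpoint Rpow (R : realType) (n : nat) : {dsp : measure_display & measurableType dsp} :=
  match n with
  | 0 => existT (fun d => measurableType d) _ (Real.sort R : measurableType _)
  | n'.+1 => existT (fun d => measurableType d) _
      (((Real.sort R : measurableType _) * projT2 (Rpow R n'))%type : measurableType _)
  end.

Definition Rsp (R : realType) (n : nat) : measurableType (projT1 (Rpow R n)) :=
  projT2 (Rpow R n).

Fixpoint leb_pow (R : realType) (n : nat) : set (Rsp R n) -> \bar R :=
  match n return set (Rsp R n) -> \bar R with
  | 0 => (@lebesgue_measure R : set R -> \bar R)
  | n'.+1 => ((@lebesgue_measure R : set R -> \bar R) \x (@leb_pow R n'))%E
  end.

Arguments Rsp : clear implicits.
Arguments leb_pow : clear implicits.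

Definition eln (R : realType) (x : \bar R) : \bar R :=
  match x with
  | r%:E => if 0 < r then (ln r)%:E else -oo%E
  | +oo%E => +oo%E
  | -oo%E => -oo%E
  end.

Section defs.
Context {dO : measure_display} {Om : measurableType dO} {R : realType}.

Definition rv_mean (P : probability Om R) (X : Om -> R) : R := fine ('E_P[X])%E.

Definition subGaussian (P : probability Om R) (X : Om -> R) (s2 : R) : Prop :=
  forall l : R,
    ('E_P[fun w => expR (l * X w)] <= (expR (l * rv_mean P X + 2^-1 * l ^+ 2 * s2))%:E)%E.

Definition bounded_support (P : probability Om R) (X : Om -> R) : Prop :=
  exists M : R, {ae P, forall w, `|X w| <= M}.
End defs.

Section backups.
Context {dO : measure_display} {Om : measurableType dO} {R : realType}
        {S : Type} {n : nat}.
Local Notation X := (Rsp R n).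

Definition soft_value (A : set X) (alpha : R) (f : X -> R) : \bar R :=
  (alpha%:E * eln (\int[leb_pow R n]_(a in A) (expR (f a / alpha))%:E))%E.

Definition Qmean (P : probability Om R) (Q : Om -> S -> X -> R) : S -> X -> R :=
  fun s a => rv_mean P (fun w => Q w s a).

Definition pess_backup (P : probability Om R) (Q : Om -> S -> X -> R)
  (sigma : S -> X -> R) (Rw : S -> X -> R) (A : set X) (gamma alpha beta : R)
  (s : S) (a : X) (s' : S) : \bar R :=
  ((Rw s a)%:E + gamma%:E *
     \int[P]_w soft_value A alpha (fun a' => (Q w s' a' - beta * sigma s' a')%R))%E.

Definition mean_backup (mu : S -> X -> R) (Rw : S -> X -> R) (A : set X)
  (gamma alpha : R) (s : S) (a : X) (s' : S) : \bar R :=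
  ((Rw s a)%:E + gamma%:E * soft_value A alpha (mu s'))%E.
End backups.

(* Main.v *)
Require Import Defs.
From HB Require Import structures.
From mathcomp Require Import all_boot all_order all_algebra.
From mathcomp Require Import all_classical all_reals all_analysis.
From mathcomp Require Import ring lra measurable_realfun.
Import Order.TTheory GRing.Theory Num.Theory.
Import numFieldNormedType.Exports.
Local Open Scope classical_set_scope.
Local Open Scope ring_scope.

Section lm0.
Variable R : realType.
Definition lm0 : set R -> \bar R := @lebesgue_measure R.
Let lm00 : lm0 set0 = 0%E. Proof. exact: (@measure0 _ _ _ (@lebesgue_measure R)). Qed.
Let lm0ge0 (A : set R) : (0 <= lm0 A)%E.
Proof. exact: (@measure_ge0 _ _ _ (@lebesgue_measure R)). Qed.
Let lm0ssa : semi_sigma_additive lm0.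
Proof. exact: (@measure_semi_sigma_additive _ _ _ (@lebesgue_measure R)). Qed.
HB.instance Definition _ := isMeasure.Build _ _ _ lm0 lm00 lm0ge0 lm0ssa.
Let lm0sf : sigma_finite setT lm0.
Proof. exact: (@sigma_finiteT _ _ _ (@lebesgue_measure R)). Qed.
HB.instance Definition _ := @Measure_isSigmaFinite.Build _ _ _ lm0 lm0sf.
End lm0.

Section lmS.
Local Open Scope ereal_scope.
Variables (R : realType) (d : measure_display) (T : measurableType d)
  (m : {sigma_finite_measure set T -> \bar R}).
Definition lmSf : set (R * T)%type -> \bar R := (lm0 R \x m).
HB.instance Definition _ := Measure.on lmSf.
Let lmSf_sf : sigma_finite setT lmSf.
Proof.
have /sigma_finiteP[F [TF ndF Foo]] := sigma_finiteT (lm0 R).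
have /sigma_finiteP[G [TG ndG Goo]] := sigma_finiteT m.
exists (fun n => F n `*` G n).
 rewrite -setXTT TF TG predeqE => -[x y]; split.
    move=> [/= [n _ Fnx] [k _ Gky]]; exists (maxn n k) => //; split.
    - by move: x Fnx; exact/subsetPset/ndF/leq_maxl.
    - by move: y Gky; exact/subsetPset/ndG/leq_maxr.
  by move=> [n _ []/= ? ?]; split; exists n.
move=> k; have [? ?] := Foo k; have [? ?] := Goo k.
split; first exact: measurableX.
by rewrite /lmSf product_measure1E// lte_mul_pinfty// ge0_fin_numE.
Qed.
HB.instance Definition _ := Measure_isSigmaFinite.Build _ _ _ lmSf lmSf_sf.
End lmS.

Fixpoint lp (R : realType) (n : nat) : {sigma_finite_measure set (Rsp R n) -> \bar R} :=
  match n return {sigma_finite_measure set (Rsp R n) -> \bar R} with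
  | 0 => [the {sigma_finite_measure set (Rsp R 0) -> \bar R} of lm0 R]
  | n1.+1 => [the {sigma_finite_measure set (Rsp R n1.+1) -> \bar R} of @lmSf R _ (Rsp R n1) (lp R n1)]
  end.

Lemma lpE (R : realType) n : (lp R n : set (Rsp R n) -> \bar R) = leb_pow R n.
Proof.
elim: n => [//|n IH].
change (((lm0 R) \x (lp R n))%E = ((lm0 R) \x (leb_pow R n))%E).
by rewrite IH.
Qed.

Section aux.
Local Open Scope ereal_scope.
Lemma le_int_gen d (T : measurableType d) (R : realType) (mu : measure T R)
  (D : set T) (f g : T -> \bar R) :
  (forall x, D x -> f x <= g x) -> \int[mu]_(x in D) f x <= \int[mu]_(x in D) g x.
Proof.
move=> fg.
have nn (h1 h2 : T -> \bar R) : (forall x, 0 <= h1 x) -> (forall x, h1 x <= h2 x) ->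
   \int[mu]_x h1 x <= \int[mu]_x h2 x.
  move=> h10 h12; have h20 x : 0 <= h2 x by apply: le_trans (h12 x).
  rewrite !ge0_integralTE//; apply: le_ereal_sup => _ [h /= hh <-].
  exists h => //= x; exact: le_trans (hh x) (h12 x).
rewrite integralE [X in _ <= X]integralE !(integral_mkcond D).
apply: leeB; apply: nn.
- by move=> x; rewrite patchE; case: ifP => // _; exact: funepos_ge0.
- move=> x; rewrite !patchE; case: ifP => // /set_mem Dx.
  by apply: (@funepos_le _ _ D) => //; [move=> y /set_mem; exact: fg | exact: mem_set].
- by move=> x; rewrite patchE; case: ifP => // _; exact: funeneg_ge0.
- move=> x; rewrite !patchE; case: ifP => // /set_mem Dx.
  by apply: (@funeneg_le _ _ D) => //; [move=> y /set_mem; exact: fg | exact: mem_set].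
Qed.
End aux.

Lemma eln_tangent (R : realType) (al c : R) (x : \bar R) : 0 < al -> 0 < c -> (0 <= x)%E ->
  (al%:E * eln x <= (al / c)%:E * x + (al * (ln c - 1))%:E)%E.
Proof.
move=> al0 c0; case: x => [r| |] // r0.
- rewrite /eln; case: ifPn => rp.
    rewrite -!EFinM -EFinD lee_fin.
    have h1 : ln (r / c) <= r / c - 1.
      have := @le_ln1Dx R (r / c - 1); have -> : 1 + (r / c - 1) = r / c by rewrite addrC subrK.
      apply.
      have : 0 < r / c by apply: divr_gt0.
      lra.
    rewrite ln_div ?posrE // in h1.
    have h2 : al * ln r <= al * (r / c + (ln c - 1)).
      by apply: ler_wpM2l; [exact: ltW | lra].
    apply: (le_trans h2); rewrite le_eqVlt; apply/orP; left; apply/eqP.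
    by rewrite mulrDr mulrA mulrAC.
  by rewrite mulrNy gtr0_sg // mul1e leNye.
- rewrite /eln mulry gtr0_sg // mul1e mulry gtr0_sg ?divr_gt0 // mul1e addye //.
Qed.

(* The action space is A ⊂ R^d with d = n.+1, Lebesgue measure leb_pow R n. *)
Theorem corollary1 (R : realType) (n : nat)
  (dS : measure_display) (S : measurableType dS)
  (dO : measure_display) (Om : measurableType dO) (P : probability Om R)
  (A : set (Rsp R n))
  (Rw : S -> Rsp R n -> R) (tau : R.-pker S ~> S)
  (gamma alpha beta : R)
  (Q : Om -> S -> Rsp R n -> R) (sigma : S -> Rsp R n -> R) :
  measurable A ->
  (0 < leb_pow R n A)%E -> (leb_pow R n A < +oo)%E ->
  0 < gamma < 1 -> 0 < alpha ->
  (* each sample Q is a measurable function on S x A *)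
  (forall w, measurable_fun setT (fun p : S * Rsp R n => Q w p.1 p.2)) ->
  (* Q is random: jointly measurable in (sample, action) *)
  (forall s, measurable_fun setT (fun p : Om * Rsp R n => Q p.1 s p.2)) ->
  (forall s, measurable_fun A (sigma s)) ->
  (forall s a, A a -> 0 <= sigma s a) ->
  (forall s a, A a -> bounded_support P (fun w => Q w s a)) ->
  (forall s a, A a -> subGaussian P (fun w => Q w s a) (sigma s a ^+ 2)) ->
  0 <= beta ->
  (* beta >= sup_{(s'',a'')} sigma(s'',a'') / (2 alpha) *)
  (forall s'' a'', A a'' -> 2^-1 * alpha^-1 * sigma s'' a'' <= beta) ->
  forall (s : S) (a : Rsp R n) (s' : S), A a ->
    (pess_backup P Q sigma Rw A gamma alpha beta s a s'
     <= mean_backup (Qmean P Q) Rw A gamma alpha s a s')%E.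
Proof.
move=> mA A0 Aoo /andP[g0 g1] al0 mQ1 mQ2 msig sig0 bnd sG b0 hb s a s' Aa.
rewrite /pess_backup /mean_backup.
apply: leeD2l; apply: lee_wpmul2l; first by rewrite lee_fin ltW.
rewrite /soft_value -!lpE.
set m := Qmean P Q s'.
set G := (\int[lp R n]_(a in A) (expR (m a / alpha))%:E)%E.
pose sg := (sigma s') \_ A.
have msg : measurable_fun setT sg by apply/(measurable_restrictT _ mA).1; exact: msig.
pose k := fun p : Om * Rsp R n => (expR ((Q p.1 s' p.2 - beta * sg p.2) / alpha) * \1_A p.2)%R.
pose f : (Om * Rsp R n)%type -> \bar R := fun p => (k p)%:E.

have mf : measurable_fun [set: (Om * Rsp R n)%type] f.
  apply/measurable_EFinP; apply: measurable_funM.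
    apply: measurableT_comp; first exact: measurable_expR.
    apply: measurable_funM; last exact: measurable_cst.
    apply: measurable_funB; first exact: mQ2.
    apply: measurable_funM; first exact: measurable_cst.
    exact: measurableT_comp msg measurable_snd.
  exact: (measurableT_comp (measurable_indic (D := setT) mA) measurable_snd).
have f0 : forall p, (0 <= f p)%E.
  by move=> p; rewrite lee_fin /k mulr_ge0 // ?expR_ge0 // indicE.
have FE : forall w, (\int[lp R n]_(a in A) (expR ((Q w s' a - beta * sigma s' a) / alpha))%:E
    = \int[lp R n]_a f (w, a))%E.
  move=> w; rewrite integral_mkcond; apply: eq_integral => y _; rewrite patchE /f /k /=.
  case: ifPn => yA.
    by rewrite indicE yA mulr1 /sg patchE yA.
  by rewrite indicE (negbTE yA) mulr0.
under eq_integral do rewrite FE.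
set F := fun w => (\int[lp R n]_a f (w, a))%E.
have F0 : forall w, (0 <= F w)%E by move=> w; apply: integral_ge0 => y _.
have mF : measurable_fun setT F.
  exact: (measurable_fun_fubini_tonelli_F (m2 := lp R n) f mf f0).
rewrite -/F.
have intF : (\int[P]_w F w <= G)%E.
  rewrite /F (fubini_tonelli f mf f0) /G (integral_mkcond A).
  apply: le_int_gen => y _; rewrite patchE; case: ifPn => yA; last first.
    under eq_integral do rewrite /f /k /= indicE (negbTE yA) mulr0.
    by rewrite integral0.
  have Ay : A y by exact: set_mem.
  under eq_integral => w _ do rewrite /f /k /= indicE yA mulr1 /sg patchE yA.
  have ee : forall w, (Q w s' y - beta * sigma s' y) / alpha
      = - (beta * sigma s' y) / alpha + alpha^-1 * Q w s' y by move=> w; ring.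
  under eq_integral => w _ do rewrite ee expRD EFinM.
  have mQy : measurable_fun setT (fun w => (expR (alpha^-1 * Q w s' y))%:E).
    apply/measurable_EFinP; apply: measurableT_comp; first exact: measurable_expR.
    apply: measurable_funM; first exact: measurable_cst.
    exact: (measurableT_comp (mQ2 s') (pair2_measurable y)).
  rewrite ge0_integralZl //; try by [move=> *; rewrite lee_fin expR_ge0 | rewrite lee_fin expR_ge0].
  have := sG s' y Ay (alpha^-1); rewrite unlock => hsg.
  apply: le_trans (lee_wpmul2l _ hsg) _; first by rewrite lee_fin expR_ge0.
  rewrite -EFinM -expRD lee_fin ler_expR.
  have := hb s' y Ay => hb'.
  have hs := sig0 s' y Ay.
  have ai : 0 < alpha^-1 by rewrite invr_gt0.
  have h3 := ler_wpM2r (mulr_ge0 hs (ltW ai)) hb'.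
  rewrite /m /Qmean.
  move: h3; set mu0 := rv_mean _ _; set sy := sigma s' y; set ia := alpha^-1.
  rewrite /= !expr2 => h3; lra.
have G0 : (0 <= G)%E by apply: integral_ge0 => y _; rewrite lee_fin expR_ge0.
have key : forall c, 0 < c -> G \is a fin_num ->
  (\int[P]_w (alpha%:E * eln (F w)) <= (alpha / c)%:E * G + (alpha * (ln c - 1))%:E)%E.
  move=> c c0 Gfin.
  apply: le_trans (@le_int_gen _ _ _ P setT (fun w => (alpha%:E * eln (F w))%E) (fun w => (alpha / c)%:E * F w + (alpha * (ln c - 1))%:E)%E _) _.
    by move=> w _; exact: eln_tangent.
  have iF : P.-integrable setT F.
    apply/integrableP; split => //.
    under eq_integral do rewrite gee0_abs //.
    by apply: le_lt_trans intF _; rewrite ltey_eq Gfin.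
  rewrite integralD //; last first.
    exact: (@finite_measure_integrable_cst _ _ _ P setT (alpha * (ln c - 1)) measurableT).
    exact: integrableZl.
  rewrite integralZl // integral_cst //.
  rewrite [X in ((alpha * (ln c - 1))%:E * X)%E](_ : _ = 1%E); last exact: probability_setT.
  rewrite mule1.
  by apply: leeD2r; apply: lee_wpmul2l => //; rewrite lee_fin divr_ge0 // ltW.
rewrite -/F.
move: G0 key; clear intF; clearbody G; case: G => [r| |] // r0 key; last first.
  by rewrite /eln mulry gtr0_sg // mul1e leey.
have [rp|rn] := ltP 0 r.
  have := key r rp erefl; rewrite /eln rp.
  suff -> : ((alpha / r)%:E * r%:E + (alpha * (ln r - 1))%:E)%E = (alpha * ln r)%:E.
    by rewrite EFinM.
  rewrite -EFinM -EFinD; congr (_%:E); field; exact: lt0r_neq0.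
have r00 : r = 0 by apply/eqP; rewrite eq_le rn -lee_fin r0.
subst r.
rewrite /eln ltxx mulrNy gtr0_sg // mul1e.
set L := (\int[P]_w _)%E.
have hL : forall M : R, (L <= M%:E)%E.
  move=> M; have := key (expR (M / alpha + 1)) (expR_gt0 _) erefl.
  rewrite mule0 add0e expRK.
  suff -> : alpha * (M / alpha + 1 - 1) = M by [].
  field; exact: lt0r_neq0.
move: hL; case: L => [l| |] // hL.
  by have := hL (l - 1)%R; rewrite lee_fin => h; exfalso; clear -h; lra.
by have := hL 0; rewrite leye_eq.
Qed.
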